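(* For each $i\in\{1,2,3\}$, the osculating circle of $\mathcal{E}$ at $P_i$ (the circle centered at $P_i''$ passing through $P_i$) passes through both $M$ and the cusp $P_i'$. Equivalently, the circle through $M,P_i,P_i'$ osculates $\mathcal{E}$ at $P_i$, and its center lies on the evolute of $\mathcal{E}$ at parameter $t_i$.
   Context: Let $a>b>0$ and $c>0$ with $c^2=a^2-b^2$. Let $\mathcal{E}$ be the ellipse $x^2/a^2+y^2/b^2=1$ with center $O=(0,0)$, parametrized by $P(t)=(a\cos t,b\sin t)$. Fix $u\in\mathbb{R}$ and let $M=M_u=(a\cos u,b\sin u)\in\mathcal{E}$. Let $\Delta_u(t)=(x_u(t),y_u(t))$, where $x_u(t)=\frac1a\big(c^2(1+\cos(t+u))\cos t-a^2\cos u\big)$ and $y_u(t)=\frac1b\big(c^2\cos t\sin(t+u)-c^2\sin t-a^2\sin u\big)$ (the negative pedal curve of $\mathcal{E}$ with respect to $M$, i.e. the envelope of the lines through $P(t)$ perpendicular to $P(t)-M$). For $i=1,2,3$ let $t_i=-u/3-2\pi(i-1)/3$, $P_i=P(t_i)$, $P_i'=\Delta_u(t_i)$ (the cusps), and $P_i''=\left(\frac{c^2\cos^3 t_i}{a},-\frac{c^2\sin^3 t_i}{b}\right)$, the point of the evolute $\mathcal{E}^*(t)=\left(\frac{c^2\cos^3t}{a},-\frac{c^2\sin^3 t}{b}\right)$ of $\mathcal{E}$ at $t_i$, i.e. the center of curvature of $\mathcal{E}$ at $P_i$. *)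

(* Defs.v *)
From Stdlib Require Import Reals.
Open Scope R_scope.

Definition ellP (a b t : R) : R * R := (a * cos t, b * sin t).

(* Negative pedal curve Delta_u(t) of the ellipse with respect to M_u. *)
Definition negpedal (a b c u t : R) : R * R :=
  ( (1 / a) * (c ^ 2 * (1 + cos (t + u)) * cos t - a ^ 2 * cos u),
    (1 / b) * (c ^ 2 * cos t * sin (t + u) - c ^ 2 * sin t - a ^ 2 * sin u) ).

Definition evolute (a b c t : R) : R * R :=
  ( c ^ 2 * (cos t) ^ 3 / a, - (c ^ 2 * (sin t) ^ 3 / b) ).

Definition dist2 (p q : R * R) : R :=
  (fst p - fst q) ^ 2 + (snd p - snd q) ^ 2.

Definition t_i (u : R) (i : nat) : R := - u / 3 - 2 * PI * (INR i - 1) / 3.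

(* Main.v *)
Require Import Defs.
From Stdlib Require Import Reals Lra.
Open Scope R_scope.

Lemma key1 (a b C S : R) : S^2 + C^2 = 1 ->
  b^2*(a^2*(4*C^3-3*C) - (a^2-b^2)*C^3)^2 + a^2*(b^2*(-(3*S-4*S^3)) + (a^2-b^2)*S^3)^2
  - (b^2*(a^2*C - (a^2-b^2)*C^3)^2 + a^2*(b^2*S + (a^2-b^2)*S^3)^2) = 0.
Proof.
  intro H.
  transitivity ((S^2+C^2-1)*(-8*a^2*b^4*S^2 + 8*a^2*b^4*S^4 + -8*a^2*b^4*C^2*S^2 + 8*a^2*b^4*C^4 + 8*a^4*b^2*S^4 + -8*a^4*b^2*C^2 + -8*a^4*b^2*C^2*S^2 + 8*a^4*b^2*C^4)).
  ring. rewrite H; ring.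
Qed.

Lemma key2 (a b C S : R) : S^2 + C^2 = 1 ->
  b^2*(((a^2-b^2)*2*C^3 - a^2*(4*C^3-3*C)) - (a^2-b^2)*C^3)^2
  + a^2*((-((a^2-b^2)*2*(S*C^2)) - (a^2-b^2)*S - a^2*(-(3*S-4*S^3))) + (a^2-b^2)*S^3)^2
  - (b^2*(a^2*C - (a^2-b^2)*C^3)^2 + a^2*(b^2*S + (a^2-b^2)*S^3)^2) = 0.
Proof.
  intro H.
  transitivity ((S^2+C^2-1)*(-4*a^2*b^4*C^2*S^2 + 8*a^2*b^4*C^4 + -4*a^4*b^2*S^2 + 8*a^4*b^2*S^4 + -8*a^4*b^2*C^2 + -16*a^4*b^2*C^2*S^2 + 8*a^4*b^2*C^4 + -4*a^6*S^2 + 8*a^6*S^4 + 4*a^6*C^2*S^2)).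
  ring. rewrite H; ring.
Qed.

Lemma trig_rel (t u : R) (k : nat) : u = -3*t - 2 * INR k * PI ->
  cos u = 4*(cos t)^3 - 3*cos t /\ sin u = -(3*sin t - 4*(sin t)^3) /\
  cos (t+u) = 2*(cos t)^2 - 1 /\ sin (t+u) = -(2*sin t*cos t).
Proof.
  intro Hu.
  assert (E1 : cos u = cos (3*t)).
  { rewrite <- (cos_period u k). replace (u + 2*INR k*PI) with (-(3*t)) by lra.
    apply cos_neg. }
  assert (E2 : sin u = - sin (3*t)).
  { rewrite <- (sin_period u k). replace (u + 2*INR k*PI) with (-(3*t)) by lra.
    apply sin_neg. }
  assert (E3 : cos (t+u) = cos (2*t)).
  { rewrite <- (cos_period (t+u) k). replace (t+u + 2*INR k*PI) with (-(2*t)) by lra.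
    apply cos_neg. }
  assert (E4 : sin (t+u) = - sin (2*t)).
  { rewrite <- (sin_period (t+u) k). replace (t+u + 2*INR k*PI) with (-(2*t)) by lra.
    apply sin_neg. }
  pose proof (sin2_cos2 t) as Hp. unfold Rsqr in Hp.
  replace (3*t) with (2*t + t) in E1, E2 by lra.
  rewrite cos_plus, cos_2a, sin_2a in E1.
  rewrite sin_plus, cos_2a, sin_2a in E2.
  rewrite cos_2a in E3. rewrite sin_2a in E4.
  repeat split.
  - rewrite E1. transitivity (4*cos t^3 - 3*cos t + (-3*cos t)*(sin t*sin t + cos t*cos t - 1)); [ring | rewrite Hp; ring].
  - rewrite E2. transitivity (-(3*sin t - 4*sin t^3) + (-3*sin t)*(sin t*sin t + cos t*cos t - 1)); [ring | rewrite Hp; ring].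
  - rewrite E3. transitivity (2*cos t^2 - 1 - (sin t*sin t + cos t*cos t - 1)); [ring | rewrite Hp; ring].
  - rewrite E4. ring.
Qed.

Theorem proposition3p3 (a b c u : R) (i : nat) :
  a > b -> b > 0 -> c > 0 -> c ^ 2 = a ^ 2 - b ^ 2 ->
  (1 <= i <= 3)%nat ->
  let ti := t_i u i in
  let Pi := ellP a b ti in
  let Pi' := negpedal a b c u ti in
  let Pi'' := evolute a b c ti in
  let M := ellP a b u in
  dist2 M Pi'' = dist2 Pi Pi'' /\ dist2 Pi' Pi'' = dist2 Pi Pi''.
Proof.
  intros Hab Hb Hc Hc2 Hi ti Pi Pi' Pi'' M.
  destruct i as [|k]; [exfalso; inversion Hi as [H0 _]; inversion H0|].
  assert (Hu : u = -3*ti - 2 * INR k * PI).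
  { unfold ti, t_i. rewrite S_INR. field. }
  destruct (trig_rel ti u k Hu) as (H1 & H2 & H3 & H4).
  pose proof (sin2_cos2 ti) as Hp. unfold Rsqr in Hp.
  assert (HP : sin ti ^2 + cos ti ^2 = 1) by (simpl; lra).
  pose proof (key1 a b (cos ti) (sin ti) HP) as K1.
  pose proof (key2 a b (cos ti) (sin ti) HP) as K2.
  assert (Ha : a <> 0) by lra. assert (Hb' : b <> 0) by lra.
  unfold Pi, Pi', Pi'', M, dist2, ellP, negpedal, evolute; cbn [fst snd]. rewrite !Hc2.
  rewrite H1, H2, H3, H4; try rewrite Hc2.
  split.
  - match goal with |- ?L = ?R => assert (L - R = (b^2*(a^2*(4*cos ti^3-3*cos ti) - (a^2-b^2)*cos ti^3)^2 + a^2*(b^2*(-(3*sin ti-4*sin ti^3)) + (a^2-b^2)*sin ti^3)^2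
  - (b^2*(a^2*cos ti - (a^2-b^2)*cos ti^3)^2 + a^2*(b^2*sin ti + (a^2-b^2)*sin ti^3)^2)) / (a^2*b^2)) by (field; auto) end.
    rewrite K1 in H. unfold Rdiv in H. rewrite Rmult_0_l in H. lra.
  - match goal with |- ?L = ?R => assert (L - R = (b^2*(((a^2-b^2)*2*cos ti^3 - a^2*(4*cos ti^3-3*cos ti)) - (a^2-b^2)*cos ti^3)^2
  + a^2*((-((a^2-b^2)*2*(sin ti*cos ti^2)) - (a^2-b^2)*sin ti - a^2*(-(3*sin ti-4*sin ti^3))) + (a^2-b^2)*sin ti^3)^2
  - (b^2*(a^2*cos ti - (a^2-b^2)*cos ti^3)^2 + a^2*(b^2*sin ti + (a^2-b^2)*sin ti^3)^2)) / (a^2*b^2)) by (field; auto) end.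
    rewrite K2 in H. unfold Rdiv in H. rewrite Rmult_0_l in H. lra.
Qed.
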